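(* Let $R$ be a commutative Noetherian ring with unity, $\lambda$ a length function on $R$-modules, $T$ a finitely generated commutative $R$-algebra, $M$ a $T$-module, and $M_0\le M$ an $R$-submodule which is finitely generated as an $R$-module, with $\lambda(M_0)<\infty$ and $TM_0=M$. Let $\bar\gamma\in T^k$ and $\bar\delta\in T^{k'}$ be two tuples of generators of $T$ as an $R$-algebra. Then the Hilbert polynomials $q_{\bar\gamma}$ and $q_{\bar\delta}$ of $M_0$ with respect to $\bar\gamma$ and $\bar\delta$ have the same degree; i.e. $\langle M;\bar\gamma\rangle$ and $\langle M;\bar\delta\rangle$ have the same $\lambda$-dimension.
   Context: A length function on $R$-modules is a function $\lambda$ from $R$-modules to $\mathbb{R}_{\ge0}\cup\{\infty\}$ with $\lambda(0)=0$, invariant under isomorphism, additive on short exact sequences, and with $\lambda(N)=\sup\{\lambda(N'):N'\le N$ finitely generated$\}$. For a tuple $\bar\gamma=(\gamma_1,\dots,\gamma_k)$ generating $T$, let $\phi:R[x_1,\dots,x_k]\to T$ be the surjective $R$-algebra homomorphism with $x_i\mapsto\gamma_i$; $\langle M;\bar\gamma\rangle$ is $M$ viewed as an $R[x_1,\dots,x_k]$-module via $\phi$. Let $T_n=\phi(S_n)$ where $S_n$ is the set of polynomials of total degree $\le n$. Then there is a polynomial $q_{\bar\gamma}\in\mathbb{R}[t]$ with $\lambda(T_nM_0)=q_{\bar\gamma}(n)$ for all large $n$; the $\lambda$-dimension of $\langle M;\bar\gamma\rangle$ is the degree of its leading term. *)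

(* Defs.v *)
From HB Require Import structures.
From mathcomp Require Import all_boot all_order all_algebra.
From mathcomp Require Import boolp classical_sets reals constructive_ereal ereal.
From mathcomp Require mpoly.

Set Implicit Arguments.
Unset Strict Implicit.
Unset Printing Implicit Defensive.

Import Order.TTheory GRing.Theory Num.Theory.
Local Open Scope classical_set_scope.
Local Open Scope ring_scope.

Section Span.
Variables (R : pzRingType) (V : lmodType R).

Definition spanset (S : set V) : set V :=
  [set v | exists s : seq (R * V),
      (forall p, p \in s -> S p.2) /\ v = \sum_(p <- s) p.1 *: p.2].

Definition spanpred (S : set V) : pred V := fun v => `[< spanset S v >].

Lemma spanpred_closed (S : set V) : subsemimod_closed (spanpred S).
Proof.
split; [split|].
- apply/asboolP; exists [::]; split=> //; by rewrite big_nil.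
- move=> u v /asboolP [su [Hsu ->]] /asboolP [sv [Hsv ->]].
  apply/asboolP; exists (su ++ sv); split; last by rewrite big_cat.
  by move=> p; rewrite mem_cat => /orP [] ?; [apply: Hsu | apply: Hsv].
- move=> a v Hv; have /asboolP [s [Hs ->]] := Hv.
  rewrite /in_mem /= /spanpred; apply/asboolP.
  exists [seq (a * p.1, p.2) | p <- s]; split.
    by move=> p /mapP [q qs ->] /=; apply: Hs.
  by rewrite big_map scaler_sumr; apply: eq_bigr => p _; rewrite scalerA.
Qed.

Definition spanT (S : set V) : Type := {v : V | spanpred S v}.

HB.instance Definition _ (S : set V) := SubChoice.on (spanT S).
HB.instance Definition _ (S : set V) :=
  GRing.SubChoice_isSubLmodule.Build R V (spanpred S) (spanT S)
    (spanpred_closed S).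

Definition is_submod (S : set V) : Prop :=
  S 0 /\ (forall (a : R) (u v : V), S u -> S v -> S (a *: u + v)).

Definition fin_gen (S : set V) : Prop :=
  exists s : seq V, S = spanset [set x | x \in s].

End Span.

Definition noetherian (R : comNzRingType) : Prop :=
  forall I : set R^o, is_submod I -> fin_gen I.

Record length_function (R : comNzRingType) (Rr : realType) := LengthFunction {
  lam :> forall V : lmodType R, \bar Rr;
  lam_ge0 : forall V : lmodType R, (0 <= lam V)%E;
  lam_zero : forall V : lmodType R, (forall v : V, v = 0) -> lam V = 0%E;
  lam_iso : forall (V W : lmodType R) (f : {linear V -> W}),
      bijective f -> lam V = lam W;
  lam_ses : forall (U V W : lmodType R) (f : {linear U -> V}) (g : {linear V -> W}),
      injective f -> (forall w, exists v, g v = w) ->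
      (forall v, g v = 0 <-> exists u, f u = v) ->
      lam V = (lam U + lam W)%E;
  lam_sup : forall V : lmodType R,
      lam V = ereal_sup [set lam (spanT [set x : V | x \in s]) | s in [set: seq V]]
}.

Section Restr.
Variables (R : comNzRingType) (T : comAlgType R) (M : lmodType T).

Definition restr : Type := M.
HB.instance Definition _ := GRing.Zmodule.on restr.

Definition restr_scale (r : R) (m : restr) : restr := (r%:A : T) *: (m : M).

Lemma restr_scaleA a b v : restr_scale a (restr_scale b v) = restr_scale (a * b) v.
Proof. by rewrite /restr_scale scalerA -scalerAl mul1r scalerA. Qed.
Lemma restr_scale1 : left_id 1 restr_scale.
Proof. by move=> v; rewrite /restr_scale scale1r scale1r. Qed.
Lemma restr_scaleDr : right_distributive restr_scale +%R.
Proof. by move=> a u v; rewrite /restr_scale scalerDr. Qed.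
Lemma restr_scaleDl v : {morph restr_scale^~ v : a b / a + b}.
Proof. by move=> a b; rewrite /restr_scale scalerDl scalerDl. Qed.

HB.instance Definition _ := GRing.Zmodule_isLmodule.Build R restr
  restr_scaleA restr_scale1 restr_scaleDr restr_scaleDl.
End Restr.

Section Hilbert.
Variables (R : comNzRingType) (T : comAlgType R) (k : nat) (g : 'I_k -> T).

Definition phi (p : mpoly.mpoly k R) : T := mpoly.mmap (fun c : R => c%:A) g p.

Definition generates : Prop := forall t : T, exists p, phi p = t.

Definition Tn (n : nat) : set T :=
  [set phi p | p in [set p : mpoly.mpoly k R | all (fun m => (mpoly.mdeg m <= n)%N) (mpoly.msupp p)]].

Variable (M : lmodType T).

Definition TnM0 (M0 : set (restr M)) (n : nat) : set (restr M) :=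
  spanset [set x : restr M | exists t m, Tn n t /\ M0 m /\ x = (t *: (m : M) : M)].

Definition hilbert_poly (Rr : realType) (lam : length_function R Rr)
    (M0 : set (restr M)) (q : {poly Rr}) : Prop :=
  exists N : nat, forall n : nat, (N <= n)%N ->
    lam (spanT (TnM0 M0 n)) = (q.[n%:R])%:E.
End Hilbert.

(* Main.v *)
Require Import Defs.
From HB Require Import structures.
From mathcomp Require Import all_boot all_order all_algebra.
From mathcomp Require Import zify.
From mathcomp Require Import boolp classical_sets reals constructive_ereal ereal.
From mathcomp Require mpoly.
Import (canonicals, coercions) mpoly.
Import Order.TTheory GRing.Theory Num.Theory.
Local Open Scope classical_set_scope.
Local Open Scope ring_scope.
Notation msz p := (@mpoly.mmeasure _ _ (mpoly.mpoly_mdeg__canonical__mpoly_Measure _) p).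
Set Implicit Arguments.
Unset Strict Implicit.
Unset Printing Implicit Defensive.
Lemma msizeM_le' (n : nat) (R : nzRingType) (p q : mpoly.mpoly n R) :
  (msz (p * q) <= (msz p + msz q).-1)%N.
Proof.
have [->|nz_p ] := eqVneq p 0; first by rewrite mul0r mpoly.msize0.
have [->|nz_q ] := eqVneq q 0; first by rewrite mulr0 mpoly.msize0.
have [->|nz_pq] := eqVneq (p * q) 0; first by rewrite mpoly.msize0.
rewrite -!mpoly.mlead_deg // addSn addnS /= ltnS.
by rewrite -mpoly.mdegD; apply: mpoly.lemc_mdeg; apply: mpoly.mleadM_le.
Qed.

Section Filt.
Variables (R : comNzRingType) (T : comAlgType R) (k : nat) (g : 'I_k -> T).

Definition D (n : nat) (t : T) :=
  exists p : mpoly.mpoly k R, (msz p <= n.+1)%N /\ phi g p = t.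

Lemma phiE p : phi g p = mpoly.mmap (in_alg T) g p.
Proof. by []. Qed.

Lemma Dmono n n' t : (n <= n')%N -> D n t -> D n' t.
Proof. by move=> le [p [hp <-]]; exists p; split=> //; apply: leq_trans hp _. Qed.

Lemma D0 n : D n 0.
Proof. by exists 0; rewrite mpoly.msize0 phiE raddf0. Qed.

Lemma DD n a b : D n a -> D n b -> D n (a + b).
Proof.
move=> [p [hp <-]] [q [hq <-]]; exists (p + q); split; last by rewrite !phiE raddfD.
by apply: leq_trans (mpoly.msizeD_le p q) _; rewrite geq_max hp hq.
Qed.

Lemma DZ n r t : D n t -> D n (r%:A * t).
Proof.
move=> [p [hp <-]]; exists (r *: p); split; last by rewrite !phiE mpoly.mmapZ.
by apply: leq_trans (mpoly.msizeZ_le _ _) hp.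
Qed.

Lemma DM n1 n2 a b : D n1 a -> D n2 b -> D (n1 + n2) (a * b).
Proof.
move=> [p [hp <-]] [q [hq <-]]; exists (p * q); split; last by rewrite !phiE rmorphM.
have := @msizeM_le' _ _ p q; lia.
Qed.

Lemma D1 : D 0 1.
Proof. by exists 1; rewrite mpoly.msize1 phiE rmorph1. Qed.

Lemma Dg i : D 1 (g i).
Proof.
exists (mpoly.mpolyX R (mpoly.mnm1 i)); rewrite mpoly.msizeX mpoly.mdeg1; split=> //.
by rewrite phiE mpoly.mmapX mpoly.mmap1U.
Qed.

Lemma DX n t e : D n t -> D (n * e) (t ^+ e).
Proof.
move=> Dt; elim: e => [|e IH]; first by rewrite muln0 expr0; exact: D1.
by rewrite exprS mulnS; apply: DM.
Qed.

Lemma TnD n t : Tn g n t <-> D n t.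
Proof.
split.
  move=> [p /= hp <-]; exists p; split=> //.
  rewrite mpoly.msizeE; apply/bigmax_leqP_seq => m hm _.
  by rewrite ltnS; move/allP: hp => /(_ m hm).
move=> [p [hp <-]]; exists p => //=; apply/allP => m hm.
by rewrite -ltnS; apply: leq_trans (mpoly.msize_mdeg_lt hm) hp.
Qed.
End Filt.

Lemma Dcomp (R : comNzRingType) (T : comAlgType R) (k k' : nat) (g : 'I_k -> T)
  (del : 'I_k' -> T) (c : nat) (H : forall i, D g c (del i)) n p :
  (msz p <= n.+1)%N -> D g (c * n) (phi del p).
Proof.
move=> hp; rewrite phiE /mpoly.mmap big_seq.
apply: (big_ind (D g (c * n))) => [|x y|m hm]; [exact: D0 | exact: DD |].
apply: DZ; apply: (@Dmono _ _ _ _ (c * mpoly.mdeg m)).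
  by apply: leq_mul => //; rewrite -ltnS; apply: leq_trans (mpoly.msize_mdeg_lt hm) hp.
rewrite mpoly.mdegE /mpoly.mmap1.
apply: (big_ind2 (fun t s => D g (c * s) t)).
- by rewrite muln0; exact: D1.
- by move=> x1 x2 y1 y2 h1 h2; rewrite mulnDr; apply: DM.
- by move=> i _; apply: DX.
Qed.

Section LamMono.
Variables (R : comNzRingType) (V W : lmodType R) (f : {linear V -> W}).

Lemma span_map s v : spanset [set x | x \in s] v ->
  spanset [set x | x \in map f s] (f v).
Proof.
move=> [l [hl ->]]; exists (map (fun p => (p.1, f p.2)) l); split.
  move=> p /mapP [q ql ->] /=; apply/mapP; exists q.2 => //; exact: hl.
by rewrite big_map linear_sum; apply: eq_bigr => p _; rewrite linearZ.
Qed.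

Lemma span_mapP s (v : spanT [set x | x \in s]) :
  spanpred [set x | x \in map f s] (f (val v)).
Proof. apply/asboolP; apply: span_map; apply/asboolP; exact: (valP v). Qed.

Definition hmap s (v : spanT [set x | x \in s]) : spanT [set x | x \in map f s] :=
  exist _ (f (val v)) (span_mapP v).

Lemma hmap_lin s : linear (@hmap s).
Proof.
move=> a u v; apply: val_inj => /=.
by rewrite !linearP.
Qed.

HB.instance Definition _ s := GRing.isLinear.Build R _ _ _ (@hmap s) (@hmap_lin s).

Hypothesis finj : injective f.

Lemma hmap_inj s : injective (@hmap s).
Proof. by move=> u v [] /finj /val_inj. Qed.

Lemma lift_seq s (l : seq (R * W)) : (forall p, p \in l -> [set x | x \in map f s] p.2) ->
  exists l0 : seq (R * V), (forall p, p \in l0 -> [set x | x \in s] p.2) /\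
     map (fun p => (p.1, f p.2)) l0 = l.
Proof.
elim: l => [|[r w] l IH] hl; first by exists [::].
have [|l0 [h1 h2]] := IH.
  by move=> p pl; apply: hl; rewrite inE pl orbT.
have /mapP [x xs ->] : w \in map f s by apply: (hl (r, w)); rewrite inE eqxx.
exists ((r, x) :: l0); split; last by rewrite /= h2.
by move=> p; rewrite inE => /orP [/eqP -> //|]; apply: h1.
Qed.

Lemma hmap_surj s w : exists v, @hmap s v = w.
Proof.
have := valP w; move=> /asboolP [l [hl hw]].
have [l0 [h1 h2]] := lift_seq hl.
have hv : spanpred [set x | x \in s] (\sum_(p <- l0) p.1 *: p.2).
  by apply/asboolP; exists l0.
exists (@exist _ (spanpred [set x | x \in s]) _ hv); apply: val_inj => /=.
rewrite hw -h2 big_map linear_sum; apply: eq_bigr => p _; by rewrite linearZ.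
Qed.

Lemma hmap_bij s : bijective (@hmap s).
Proof.
have [ginv hg] := choice (@hmap_surj s).
exists ginv => [v|w]; last exact: hg.
by apply: hmap_inj; rewrite hg.
Qed.

Lemma lam_le (Rr : realType) (lam : length_function R Rr) : (lam V <= lam W)%E.
Proof.
rewrite (lam_sup lam V) (lam_sup lam W).
apply: ge_ereal_sup => x [s _ <-].
rewrite (@lam_iso _ _ lam _ _ (@hmap s) (hmap_bij s)).
by apply: ereal_sup_ubound; exists (map f s).
Qed.
End LamMono.

Section Incl.
Variables (R : comNzRingType) (V : lmodType R) (A B : set V) (hAB : A `<=` B).

Lemma inclP (v : spanT A) : spanpred B (val v).
Proof.
have /asboolP [l [hl hv]] := valP v.
by apply/asboolP; exists l; split => // p /hl /hAB.
Qed.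

Definition incl (v : spanT A) : spanT B := exist _ (val v) (inclP v).

Lemma incl_lin : linear incl.
Proof. by move=> a u v; apply: val_inj. Qed.

HB.instance Definition _ := GRing.isLinear.Build R _ _ _ incl incl_lin.

Lemma lam_incl (Rr : realType) (lam : length_function R Rr) :
  (lam (spanT A) <= lam (spanT B))%E.
Proof.
apply: (@lam_le _ _ _ incl) => u v [] /val_inj //.
Qed.
End Incl.

Lemma poly_bound (Rr : realFieldType) (p : {poly Rr}) (x : Rr) m :
  1 <= x -> (size p <= m.+1)%N ->
  `|p.[x]| <= (\sum_(i < size p) `|p`_i|) * x ^+ m.
Proof.
move=> x1 hs; rewrite horner_coef mulr_suml.
apply: le_trans (ler_norm_sum _ _ _) _; apply: ler_sum => i _.
rewrite normrM normrX (ger0_norm (le_trans ler01 x1)).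
apply: ler_wpM2l; first exact: normr_ge0.
apply: ler_weXn2l => //; have := ltn_ord i; lia.
Qed.

Lemma deg_le (Rr : realType) (p q : {poly Rr}) (c N : nat) : (0 < c)%N ->
  (forall n, (N <= n)%N -> 0 <= p.[n%:R] /\ p.[n%:R] <= q.[(c * n)%:R]) ->
  ((size p).-1 <= (size q).-1)%N.
Proof.
move=> c0 H; rewrite leqNgt; apply/negP => hlt.
set d := (size p).-1 in hlt.
have sp : size p = d.+1 by rewrite /d; lia.
have d1 : (1 <= d)%N by lia.
set a := lead_coef p.
have a0 : a != 0 by rewrite lead_coef_eq0 -size_poly_gt0 sp.
set p' := p - a *: 'X^d.
have sp' : (size p' <= (d.-1).+1)%N.
  have -> : (d.-1).+1 = d by lia.
  apply/leq_sizeP => j hj; rewrite /p' coefB coefZ coefXn.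
  have [->|ne] := eqVneq j d; first by rewrite mulr1 /a lead_coefE -/d subrr.
  rewrite mulr0 subr0; move/leq_sizeP: (leqnn (size p)) => hz; apply: hz; lia.
have sq : (size q <= (d.-1).+1)%N by lia.
set A := \sum_(i < size p') `|p'`_i|.
set Sq := \sum_(i < size q) `|q`_i|.
set B := Sq * (c%:R : Rr) ^+ d.-1.
have A0 : 0 <= A by apply: sumr_ge0 => i _; exact: normr_ge0.
have B0 : 0 <= B.
  by apply: mulr_ge0; [apply: sumr_ge0 => i _; exact: normr_ge0 | apply: exprn_ge0; exact: ler0n].
have a0' : 0 < `|a| by rewrite normr_gt0.
set n := maxn N (Num.bound ((A + B) / `|a|)).+1.
set x : Rr := n%:R.
have x1 : 1 <= x by rewrite /x ler1n /n; lia.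
have [hp0 hpq] := H n (leq_maxl _ _).
have hpE : p.[x] = a * x ^+ d + p'.[x].
  by rewrite /p' hornerD hornerN hornerZ hornerXn addrC subrK.
have h2 : `|p'.[x]| <= A * x ^+ d.-1 by apply: poly_bound.
have h3 : `|q.[(c * n)%:R]| <= B * x ^+ d.-1.
  have c1 : 1 <= (c%:R : Rr) by rewrite ler1n.
  rewrite /B -mulrA -exprMn natrM -/x.
  apply: poly_bound => //.
  by apply: le_trans (ler_pM ler01 ler01 c1 x1); rewrite mulr1.
have key : `|a| * x ^+ d <= (A + B) * x ^+ d.-1.
  have : a * x ^+ d = p.[x] - p'.[x] by rewrite hpE addrK.
  move=> e; rewrite -(ger0_norm (exprn_ge0 d (le_trans ler01 x1))) -normrM e.
  apply: le_trans (ler_normB _ _) _.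
  rewrite mulrDl addrC; apply: lerD => //.
  rewrite ger0_norm //; apply: le_trans hpq _; apply: le_trans (ler_norm _) h3.
have y0 : 0 < x ^+ d.-1 by apply: exprn_gt0; apply: lt_le_trans x1; exact: ltr01.
have : `|a| * x <= A + B.
  by rewrite -(ler_pM2r y0) -mulrA -exprS -/d; have -> : (d.-1).+1 = d by lia.
rewrite mulrC -ler_pdivlMr //.
have : (A + B) / `|a| < x.
  apply: lt_le_trans (archi_boundP _) _.
    by apply: divr_ge0; [exact: addr_ge0 | exact: ltW].
  rewrite /x ler_nat /n; lia.
by move=> lt1 le1; have := lt_le_trans lt1 le1; rewrite ltxx.
Qed.

Lemma one_dir (R : comNzRingType) (Rr : realType) (lam : length_function R Rr)
    (T : comAlgType R) (M : lmodType T) (M0 : set (restr M))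
    (k k' : nat) (gam : 'I_k -> T) (del : 'I_k' -> T) (qg qd : {poly Rr}) :
  generates gam ->
  hilbert_poly gam lam M0 qg -> hilbert_poly del lam M0 qd ->
  ((size qd).-1 <= (size qg).-1)%N.
Proof.
move=> Gg [Ng Hg] [Nd Hd].
have [P hP] := choice (fun i : 'I_k' => Gg (del i)).
set c := (\max_i msz (P i)).+1.
have Hc : forall i, D gam c (del i).
  move=> i; exists (P i); split; last exact: hP.
  have := @leq_bigmax _ (fun i => msz (P i)) i; rewrite /c; lia.
have sub n : Tn del n `<=` Tn gam (c * n).
  move=> t /TnD [p [hp <-]]; apply/TnD; exact: Dcomp.
have subM n : TnM0 del M0 n `<=` TnM0 gam M0 (c * n).
  move=> v [l [hl ->]]; exists l; split=> // p /hl [t [m [ht [hm ->]]]].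
  by exists t, m; split=> //; apply: sub.
apply: (@deg_le _ _ _ c (maxn Nd Ng)) => // n hn.
have e1 := Hd n (leq_trans (leq_maxl _ _) hn).
have e2 := Hg (c * n)%N (leq_trans (leq_trans (leq_maxr _ _) hn) (leq_pmull _ (ltn0Sn _))).
split.
  by rewrite -lee_fin -e1; apply: lam_ge0.
by rewrite -lee_fin -e1 -e2; apply: lam_incl.
Qed.

Theorem lemma7p3 (R : comNzRingType) (Rr : realType) (lam : length_function R Rr)
    (T : comAlgType R) (M : lmodType T) (M0 : set (restr M))
    (k k' : nat) (gam : 'I_k -> T) (del : 'I_k' -> T) (qg qd : {poly Rr}) :
  noetherian R ->
  is_submod M0 -> fin_gen M0 -> (lam (spanT M0) < +oo)%E ->
  spanset (M0 : set M) = setT ->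
  generates gam -> generates del ->
  hilbert_poly gam lam M0 qg -> hilbert_poly del lam M0 qd ->
  (size qg).-1 = (size qd).-1.
Proof.
move=> _ _ _ _ _ Gg Gd Hg Hd; apply/eqP; rewrite eqn_leq.
by rewrite (one_dir Gd Hd Hg) (one_dir Gg Hg Hd).
Qed.
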